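(* Let $n\ge1$, let $\alpha,\beta,c$ be real constants and $F$ a smooth real function of one variable. Consider $$F(p)_{tt}-\alpha p_{ttt}-\beta\,\nabla^2p_t=c^2\nabla^2p$$ for $p(x_1,\dots,x_n,t)$, where $\nabla^2=\sum_{i=1}^n\partial^2/\partial x_i^2$. Let $\phi(x_1,\dots,x_n)$ and $\psi(x_1,\dots,x_n)$ be harmonic functions ($\nabla^2\phi=\nabla^2\psi=0$). Then every smooth solution $p$ satisfies the conservation law $\partial_tT^t+\sum_{i=1}^n\partial_{x_i}T^{x_i}=0$ with $$T^t=(\phi+t\psi)\big(F'(p)p_t-\alpha p_{tt}\big)-\psi\big(F(p)-\alpha p_t\big),$$ $$T^{x_i}=-c^2\big[(\phi+t\psi)p_{x_i}-p(\phi_{x_i}+t\psi_{x_i})\big]-\beta\big[(\phi+t\psi)p_{tx_i}-(\phi_{x_i}+t\psi_{x_i})p_t\big].$$ In particular, for $n\ge2$ the equation has infinitely many conservation laws.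
   Context: Subscripts denote partial derivatives. The corresponding multiplier is $\Lambda=\phi+t\psi$. *)

(* Defs.v *)
From HB Require Import structures.
From mathcomp Require Import all_boot all_order all_algebra.
From mathcomp Require Import all_classical all_reals all_analysis.
Set Implicit Arguments. Unset Strict Implicit. Unset Printing Implicit Defensive.
Import Order.TTheory GRing.Theory Num.Theory.
Import numFieldNormedType.Exports.
Local Open Scope ring_scope.

Section PDE.
Variables (R : realType) (n : nat).

Definition upd (x : 'I_n -> R) (i : 'I_n) (s : R) : 'I_n -> R :=
  fun j => if j == i then s else x j.

(* partial derivative: None = d/dt, Some i = d/dx_i *)
Definition pd (k : option 'I_n) (f : ('I_n -> R) -> R -> R) : ('I_n -> R) -> R -> R :=
  match k with
  | None => fun x t => derive1 (f x) t
  | Some i => fun x t => derive1 (fun s => f (upd x i s) t) (x i)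
  end.

Definition pderivable (k : option 'I_n) (f : ('I_n -> R) -> R -> R) x t : Prop :=
  match k with
  | None => derivable (f x) t 1
  | Some i => derivable (fun s => f (upd x i s) t) (x i) 1
  end.

Definition pds (ks : seq (option 'I_n)) (f : ('I_n -> R) -> R -> R) :=
  foldr pd f ks.

Definition jcont (g : ('I_n -> R) -> R -> R) : Prop :=
  forall x t (e : R), 0 < e -> exists2 d : R, 0 < d &
    forall y s, (forall i, `|y i - x i| < d) -> `|s - t| < d ->
      `|g y s - g x t| < e.

Definition Ck (k : nat) (f : ('I_n -> R) -> R -> R) : Prop :=
  forall ks : seq (option 'I_n), (size ks <= k)%N ->
    jcont (pds ks f) /\
    ((size ks < k)%N -> forall k0 x t, pderivable k0 (pds ks f) x t).

Definition smooth (f : ('I_n -> R) -> R -> R) : Prop := forall k, Ck k f.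

Definition sp (phi : ('I_n -> R) -> R) : ('I_n -> R) -> R -> R := fun x _ => phi x.

Definition lap (f : ('I_n -> R) -> R -> R) : ('I_n -> R) -> R -> R :=
  fun x t => \sum_(i < n) pd (Some i) (pd (Some i) f) x t.

Definition is_harmonic (phi : ('I_n -> R) -> R) : Prop :=
  Ck 2 (sp phi) /\ forall x, lap (sp phi) x 0 = 0.

End PDE.

Definition smooth1 (R : realType) (F : R -> R) : Prop :=
  forall (k : nat) (x : R), derivable (iter k (fun g : R -> R => derive1 g) F) x 1.

Arguments upd {R n}. Arguments pd {R n}. Arguments pderivable {R n}.
Arguments pds {R n}. Arguments jcont {R n}. Arguments Ck {R n}.
Arguments smooth {R n}. Arguments sp {R n}. Arguments lap {R n}.
Arguments is_harmonic {R n}. Arguments smooth1 {R}.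

(* Main.v *)
Require Import Defs.
From HB Require Import structures.
From mathcomp Require Import all_boot all_order all_algebra.
From mathcomp Require Import all_classical all_reals all_analysis.
From mathcomp Require Import ring.
Import Order.TTheory GRing.Theory Num.Theory.
Import numFieldNormedType.Exports.
Local Open Scope ring_scope.

Set Implicit Arguments.
Section Help.
Variable R : realType.
Implicit Types f g : R -> R.

Lemma D1 f x d : is_derive x (1:R) f d -> derive1 f x = d.
Proof. by move=> H; rewrite derive1E; exact: derive_val. Qed.

Lemma isD f x : derivable f x 1 -> is_derive x (1:R) f (derive1 f x).
Proof. by move=> H; rewrite derive1E; exact: derivableP. Qed.

Lemma dM f g x df dg : is_derive x (1:R) f df -> is_derive x (1:R) g dg ->
  is_derive x (1:R) (fun y => f y * g y) (f x * dg + g x * df).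
Proof. by move=> A B; have := is_deriveM A B. Qed.

Lemma dD f g x df dg : is_derive x (1:R) f df -> is_derive x (1:R) g dg ->
  is_derive x (1:R) (fun y => f y + g y) (df + dg).
Proof. by move=> A B; have := is_deriveD A B. Qed.

Lemma dB f g x df dg : is_derive x (1:R) f df -> is_derive x (1:R) g dg ->
  is_derive x (1:R) (fun y => f y - g y) (df - dg).
Proof. by move=> A B; have := is_deriveB A B. Qed.

Lemma dK (k : R) x : is_derive x (1:R) (fun _ => k) 0.
Proof. exact: is_derive_cst. Qed.

Lemma did x : is_derive x (1:R) (fun y => y) 1.
Proof. exact: is_derive_id. Qed.

Lemma dC (k : R) f x df : is_derive x (1:R) f df ->
  is_derive x (1:R) (fun y => k * f y) (k * df).
Proof.
move=> A; have := dM (dK k x) A; rewrite mulr0 addr0.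
by [].
Qed.

Lemma dcomp f g x : derivable f x 1 -> derivable g (f x) 1 ->
  is_derive x (1:R) (fun y => g (f y)) (derive1 g (f x) * derive1 f x).
Proof.
move=> df dg.
have dc : derivable (g \o f) x 1.
  apply/derivable1_diffP; apply: differentiable_comp; exact/derivable1_diffP.
rewrite -(derive1_comp df dg); exact: isD dc.
Qed.

Lemma dlin (a b t : R) : is_derive t (1:R) (fun s => a + s * b) b.
Proof. by have := dD (dK a t) (dM (did t) (dK b t)); rewrite add0r mulr0 add0r mulr1. Qed.

Lemma partA (F P : R -> R) a b al t :
 (forall s, derivable F s 1) -> (forall s, derivable (derive1 F) s 1) ->
 (forall s, derivable P s 1) -> derivable (derive1 P) t 1 ->
 derivable (derive1 (derive1 P)) t 1 ->
 derive1 (fun s => (a + s*b) * (derive1 F (P s) * derive1 P s - al * derive1 (derive1 P) s)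
     - b * (F (P s) - al * derive1 P s)) t
 = (a + t*b) * (derive1 (fun s => derive1 (fun r => F (P r)) s) t
     - al * derive1 (derive1 (derive1 P)) t).
Proof.
move=> hF hF1 hP hP1 hP2.
have E : (fun s => derive1 (fun r => F (P r)) s) = (fun s => derive1 F (P s) * derive1 P s).
  by apply: funext => s; exact: (D1 (dcomp (hP s) (hF (P s)))).
rewrite E.
have G := dM (dcomp (hP t) (hF1 (P t))) (isD hP1).
rewrite (D1 G).
have H := dB (dM (dlin a b t) (dB G (dC al (isD hP2))))
   (dC b (dB (dcomp (hP t) (hF (P t))) (dC al (isD hP1)))).
rewrite (D1 H).
by rewrite [(_ - _) * b]mulrC addrK.
Qed.

Lemma algB (c2 be L L1 L2 P P1 P2 Q Q1 Q2 : R) :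
  c2 * (L * P2 + P1 * L1 - (P * L2 + L1 * P1)) - be * (L * Q2 + Q1 * L1 - (L1 * Q1 + Q * L2))
  = c2 * (L * P2 - P * L2) - be * (L * Q2 - L2 * Q).
Proof. ring. Qed.

Lemma partB (P Q Ph Ps : R -> R) (c2 be t X : R) :
 derivable P X 1 -> derivable (derive1 P) X 1 -> derivable Q X 1 -> derivable (derive1 Q) X 1 ->
 derivable Ph X 1 -> derivable (derive1 Ph) X 1 -> derivable Ps X 1 -> derivable (derive1 Ps) X 1 ->
 derive1 (fun s => c2 * ((Ph s + t * Ps s) * derive1 P s - P s * (derive1 Ph s + t * derive1 Ps s))
           - be * ((Ph s + t * Ps s) * derive1 Q s - (derive1 Ph s + t * derive1 Ps s) * Q s)) X
 = c2 * ((Ph X + t * Ps X) * derive1 (derive1 P) X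
          - P X * (derive1 (derive1 Ph) X + t * derive1 (derive1 Ps) X))
   - be * ((Ph X + t * Ps X) * derive1 (derive1 Q) X
          - (derive1 (derive1 Ph) X + t * derive1 (derive1 Ps) X) * Q X).
Proof.
move=> hP hP1 hQ hQ1 hh hh1 hs hs1.
have dL := dD (isD hh) (dC t (isD hs)).
have dL' := dD (isD hh1) (dC t (isD hs1)).
have H := dB (dC c2 (dB (dM dL (isD hP1)) (dM (isD hP) dL')))
             (dC be (dB (dM dL (isD hQ1)) (dM dL' (isD hQ)))).
rewrite (D1 H).
exact: algB.
Qed.

Variable n : nat.
Implicit Types (ff : ('I_n -> R) -> R -> R).

Lemma updU (f : ('I_n -> R) -> R -> R) (y : 'I_n -> R) i s t :
  pd (Some i) f (upd y i s) t = derive1 (fun s' => f (upd y i s') t) s.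
Proof.
rewrite /pd.
have -> : (fun s' => f (upd (upd y i s) i s') t) = (fun s' => f (upd y i s') t).
  apply: funext => s'; congr f; apply: funext => j; rewrite /upd.
  by case: (j == i).
by rewrite /upd eqxx.
Qed.

Lemma pdd (f : ('I_n -> R) -> R -> R) (y : 'I_n -> R) i t :
  pd (Some i) (pd (Some i) f) y t = derive1 (derive1 (fun s => f (upd y i s) t)) (y i).
Proof.
transitivity (derive1 (fun s => pd (Some i) f (upd y i s) t) (y i)); first by [].
have -> // : (fun s => pd (Some i) f (upd y i s) t) = derive1 (fun s => f (upd y i s) t).
apply: funext => s; exact: updU.
Qed.

Lemma pder2 (f : ('I_n -> R) -> R -> R) (y : 'I_n -> R) i t :
  pderivable (Some i) (pd (Some i) f) y t ->
  derivable (derive1 (fun s => f (upd y i s) t)) (y i) 1.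
Proof.
rewrite /pderivable.
have -> // : (fun s => pd (Some i) f (upd y i s) t) = derive1 (fun s => f (upd y i s) t).
apply: funext => s; exact: updU.
Qed.

Lemma sumB4 (k1 k2 L P Q t : R) (a b c d : 'I_n -> R) :
  \sum_(i < n) (k1 * (L * a i - P * (c i + t * d i)) - k2 * (L * b i - (c i + t * d i) * Q))
  = k1 * (L * \sum_i a i - P * (\sum_i c i + t * \sum_i d i))
    - k2 * (L * \sum_i b i - (\sum_i c i + t * \sum_i d i) * Q).
Proof.
rewrite sumrB -!mulr_sumr !sumrB -!mulr_sumr -!mulr_suml !big_split -!mulr_sumr.
by [].
Qed.
Lemma algF (L E SA SB SC SD c2 b P Q t : R) : E - b * SB = c2 * SA ->
  SC = 0 -> SD = 0 ->
  L * E + (- c2 * (L * SA - P * (SC + t * SD)) - b * (L * SB - (SC + t * SD) * Q)) = 0.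
Proof. move=> h -> ->; have -> : E = c2 * SA + b * SB by rewrite -h; ring.
ring. Qed.
End Help.
Unset Implicit Arguments.


Theorem mainTheorem6 (R : realType) (n : nat) (hn : (1 <= n)%N)
  (alpha beta c : R) (F : R -> R) (phi psi : ('I_n -> R) -> R)
  (p : ('I_n -> R) -> R -> R) :
  smooth1 F ->
  is_harmonic phi -> is_harmonic psi ->
  smooth p ->
  (forall x t,
     pd None (pd None (fun y s => F (p y s))) x t
     - alpha * pd None (pd None (pd None p)) x t
     - beta * lap (pd None p) x t
     = c ^+ 2 * lap p x t) ->
  let Lam := fun x t => phi x + t * psi x in
  let Tt := fun x t =>
      Lam x t * (derive1 F (p x t) * pd None p x t - alpha * pd None (pd None p) x t)
      - psi x * (F (p x t) - alpha * pd None p x t) in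
  let Tx := fun (i : 'I_n) x t =>
      - c ^+ 2 * (Lam x t * pd (Some i) p x t
                  - p x t * (pd (Some i) (sp phi) x t + t * pd (Some i) (sp psi) x t))
      - beta * (Lam x t * pd (Some i) (pd None p) x t
                - (pd (Some i) (sp phi) x t + t * pd (Some i) (sp psi) x t)
                  * pd None p x t) in
  forall x t, pd None Tt x t + \sum_(i < n) pd (Some i) (Tx i) x t = 0.
Proof.
move=> hF hphi hpsi hp heq Lam Tt Tx x t.
have hpd : forall ks k0 y s, pderivable k0 (pds ks p) y s.
  by move=> ks k0 y s; exact: ((hp (size ks).+1 ks (leqnSn _)).2 (ltnSn _) k0 y s).
have hF0 : forall s, derivable F s 1 := hF 0%N.
have hF1 : forall s, derivable (derive1 F) s 1 := hF 1%N.
have hph0 : forall i, pderivable (Some i) (sp phi) x t.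
  by move=> i; exact: ((hphi.1 [::] isT).2 isT (Some i) x t).
have hph1 : forall i, pderivable (Some i) (pd (Some i) (sp phi)) x t.
  by move=> i; exact: ((hphi.1 [:: Some i] isT).2 isT (Some i) x t).
have hps0 : forall i, pderivable (Some i) (sp psi) x t.
  by move=> i; exact: ((hpsi.1 [::] isT).2 isT (Some i) x t).
have hps1 : forall i, pderivable (Some i) (pd (Some i) (sp psi)) x t.
  by move=> i; exact: ((hpsi.1 [:: Some i] isT).2 isT (Some i) x t).
have A : pd None Tt x t = Lam x t * (pd None (pd None (fun y s => F (p y s))) x t
            - alpha * pd None (pd None (pd None p)) x t).
  exact: (partA (phi x) (psi x) alpha hF0 hF1 (fun s => hpd [::] None x s)
           (hpd [:: None] None x t) (hpd [:: None; None] None x t)).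
have B : forall i, pd (Some i) (Tx i) x t =
    (- c ^+ 2) * (Lam x t * pd (Some i) (pd (Some i) p) x t
        - p x t * (pd (Some i) (pd (Some i) (sp phi)) x t + t * pd (Some i) (pd (Some i) (sp psi)) x t))
    - beta * (Lam x t * pd (Some i) (pd (Some i) (pd None p)) x t
        - (pd (Some i) (pd (Some i) (sp phi)) x t + t * pd (Some i) (pd (Some i) (sp psi)) x t)
          * pd None p x t).
  move=> i.
  change (pd (Some i) (Tx i) x t) with (derive1 (fun s => Tx i (upd x i s) t) (x i)).
  have -> : (fun s => Tx i (upd x i s) t) = (fun s =>
     (- c ^+ 2) * ((phi (upd x i s) + t * psi (upd x i s)) * derive1 (fun s' => p (upd x i s') t) s
        - p (upd x i s) t * (derive1 (fun s' => phi (upd x i s')) s + t * derive1 (fun s' => psi (upd x i s')) s))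
     - beta * ((phi (upd x i s) + t * psi (upd x i s)) * derive1 (fun s' => pd None p (upd x i s') t) s
        - (derive1 (fun s' => phi (upd x i s')) s + t * derive1 (fun s' => psi (upd x i s')) s)
          * pd None p (upd x i s) t)).
    by apply: funext => s; rewrite /Tx /Lam !updU.
  rewrite !pdd.
  have upx : upd x i (x i) = x.
    by apply: funext => j; rewrite /upd; case: eqP => // ->.
  rewrite /Lam -[in phi x]upx -[in psi x]upx -[in p x t]upx -[in pd None p x t]upx.
  exact: (partB (- c ^+ 2) beta t (hpd [::] (Some i) x t) (pder2 (hpd [:: Some i] (Some i) x t))
     (hpd [:: None] (Some i) x t) (pder2 (hpd [:: Some i; None] (Some i) x t))
     (hph0 i) (pder2 (hph1 i)) (hps0 i) (pder2 (hps1 i))).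
rewrite A (eq_bigr _ (fun i _ => B i)) sumB4.
have h1 : \sum_(i < n) pd (Some i) (pd (Some i) (sp phi)) x t = 0 := hphi.2 x.
have h2 : \sum_(i < n) pd (Some i) (pd (Some i) (sp psi)) x t = 0 := hpsi.2 x.
apply: algF; [exact: (heq x t) | exact: h1 | exact: h2].
Qed.
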